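(* In a $\$$-bounded contract, for all $\mathcal{A}\subseteq\mathbb{A}$, all mempools $\mathcal{P}\subseteq\mathbb{X}$ and all states $s$, there exists a finite $\mathcal{P}_0\subseteq\mathcal{P}$ such that $\mathrm{MEV}_{\mathcal{A}}(s,\mathcal{P}_0)=\mathrm{MEV}_{\mathcal{A}}(s,\mathcal{P})$.
   Context: Fix a countably infinite set $\mathbb{A}$ of actors, a set $\mathbb{T}$ of token types and a set $\mathbb{X}$ of transactions. A wallet is a function $\mathbb{T}\to\mathbb{N}$; $\mathbb{W}_{\mathrm{fin}}$ is the set of finite-support wallets. A wallet state is $W:\mathbb{A}\to(\mathbb{T}\to\mathbb{N})$ satisfying the finite tokens axiom $\sum_{\tau}\sum_{a\in\mathbb{A}}W(a)(\tau)\in\mathbb{N}$. A contract consists of blockchain states $\mathbb{S}=\mathbb{C}\times\mathbb{W}$ (contract state, wallet state), a partial transition function $\mapsto:(\mathbb{S}\times\mathbb{X})\rightharpoonup\mathbb{S}$ and initial states $\mathbb{S}_0$. A transaction $x$ is valid in $s$ if $s\xmapsto{x}s'$ for some $s'$. For finite sequences, $s\xrightarrow{\varepsilon}s$, and $s\xrightarrow{\vec{Y}x}s'$ iff either $s\xrightarrow{\vec{Y}}s''\xmapsto{x}s'$, or $s\xrightarrow{\vec{Y}}s'$ and $x$ is not valid in $s'$. States are assumed reachable from $\mathbb{S}_0$. $W_{\mathcal{A}}(s)=\sum_{a\in\mathcal{A}}W(s)(a)$. A wealth function is an additive map $\$:\mathbb{W}_{\mathrm{fin}}\to\mathbb{N}$;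 $\$_{\mathcal{A}}(s)=\$(W_{\mathcal{A}}(s))$; the gain is $G_{\mathcal{A}}(s,\vec{X})=\$_{\mathcal{A}}(s')-\$_{\mathcal{A}}(s)$ where $s\xrightarrow{\vec X}s'$. The contract is $\$$-bounded if for every $s_0\in\mathbb{S}_0$ there is $n$ such that $\$_{\mathbb{A}}(s)<n$ for all $s$ reachable from $s_0$. A transaction deducibility function $\kappa:\mathcal{P}(\mathbb{A})\times\mathcal{P}(\mathbb{X})\to\mathcal{P}(\mathbb{X})$, $(\mathcal{A},\mathcal{X})\mapsto\kappa_{\mathcal{A}}(\mathcal{X})$, satisfies: extensivity $\mathcal{X}\subseteq\kappa_{\mathcal{A}}(\mathcal{X})$; idempotence $\kappa_{\mathcal{A}}(\kappa_{\mathcal{A}}(\mathcal{X}))=\kappa_{\mathcal{A}}(\mathcal{X})$; monotonicity in both arguments; continuity $\kappa_{\mathcal{A}}(\bigcup_i\mathcal{X}_i)=\bigcup_i\kappa_{\mathcal{A}}(\mathcal{X}_i)$ for increasing chains; finite causes (every finite $\mathcal{X}_0$ is contained in $\kappa_{\mathcal{A}_0}(\emptyset)$ for some finite $\mathcal{A}_0$); private knowledge ($\kappa_{\mathcal{A}}(\emptyset)\subseteq\kappa_{\mathcal{A}'}(\emptyset)$ implies $\mathcal{A}\subseteq\mathcal{A}'$); no shared secrets ($\kappa_{\mathcal{A}}(\mathcal{X})\cap\kappa_{\mathcal{B}}(\mathcal{X})\subseteq\kappa_{\mathcal{A}\cap\mathcal{B}}(\mathcal{X})$). $\mathcal{X}^*$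 denotes finite sequences over $\mathcal{X}$. The unrealized gain is $\mathrm{uG}_{\mathcal{A}}(s)=\max\{G_{\mathcal{A}}(s,\vec{Y}):\vec{Y}\in\kappa_{\mathcal{A}}(\emptyset)^*\}$; the external gain is $\mathrm{xG}_{\mathcal{A}}(s,\vec{Y})=G_{\mathcal{A}}(s,\vec{Y})-\mathrm{uG}_{\mathcal{A}}(s)$; $\mathrm{MEV}_{\mathcal{A}}(s,\mathcal{P})=\max\{\mathrm{xG}_{\mathcal{A}}(s,\vec{Y}):\vec{Y}\in\kappa_{\mathcal{A}}(\mathcal{P})^*\}$. *)

(* Defs.v *)
From mathcomp Require Import all_boot all_order all_algebra.
From mathcomp Require Import boolp classical_sets functions cardinality fsbigop.

Set Implicit Arguments.
Unset Strict Implicit.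
Unset Printing Implicit Defensive.

Import Order.TTheory GRing.Theory Num.Theory.
Local Open Scope classical_set_scope.

Section Model.
Variables (actor : choiceType) (tok : Type) (tx : Type).

Definition wallet := tok -> nat.

Definition fin_supp_wallet (w : wallet) : Prop := finite_set [set t | w t <> 0%N].

(** Finite tokens axiom: sum_tau sum_a W(a)(tau) is a natural number
    (an infinite sum of naturals is finite iff finitely many summands are nonzero). *)
Definition finite_tokens (W : actor -> wallet) : Prop :=
  finite_set [set p : actor * tok | W p.1 p.2 <> 0%N].

Definition wstate := {W : actor -> wallet | finite_tokens W}.

Record contract := Contract {
  cstate : Type;
  step : cstate * wstate -> tx -> option (cstate * wstate);
  init : set (cstate * wstate)
}.
Arguments init : clear implicits.

Definition bstate (C : contract) := (cstate C * wstate)%type.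

Definition Wof (C : contract) (s : bstate C) : actor -> wallet := proj1_sig s.2.

(** Execution of a finite sequence: invalid transactions are skipped. *)
Definition exec (C : contract) (s : bstate C) (Y : seq tx) : bstate C :=
  foldl (fun s x => odflt s (step s x)) s Y.

Definition reachable_from (C : contract) (s0 s : bstate C) : Prop :=
  exists Y : seq tx, exec s0 Y = s.

Definition reachable (C : contract) (s : bstate C) : Prop :=
  exists2 s0, init C s0 & reachable_from s0 s.

Definition W_set (C : contract) (A : set actor) (s : bstate C) : wallet :=
  fun t => \big[addn/0%N]_(a \in A) Wof s a t.

Definition wealth_fun (w : wallet -> nat) : Prop :=
  forall w1 w2 : wallet, fin_supp_wallet w1 -> fin_supp_wallet w2 ->
    w (fun t => (w1 t + w2 t)%N) = (w w1 + w w2)%N.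

Definition wealthA (wf : wallet -> nat) (C : contract) (A : set actor) (s : bstate C) : nat :=
  wf (W_set A s).

Definition bounded (wf : wallet -> nat) (C : contract) : Prop :=
  forall s0, init C s0 -> exists n : nat, forall s, reachable_from s0 s ->
    (wealthA wf [set: actor] s < n)%N.

Definition gain (wf : wallet -> nat) (C : contract) (A : set actor) (s : bstate C)
    (Y : seq tx) : int :=
  ((wealthA wf A (exec s Y))%:Z - (wealthA wf A s)%:Z)%R.

Definition is_chain (K : set (set tx)) : Prop :=
  forall X1 X2, K X1 -> K X2 -> X1 `<=` X2 \/ X2 `<=` X1.

Record tdf (kappa : set actor -> set tx -> set tx) : Prop := Tdf {
  tdf_extensive : forall A X, X `<=` kappa A X;
  tdf_idempotent : forall A X, kappa A (kappa A X) = kappa A X;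
  tdf_monotone : forall A A' X X', A `<=` A' -> X `<=` X' -> kappa A X `<=` kappa A' X';
  tdf_continuous : forall A (K : set (set tx)), K !=set0 -> is_chain K ->
      kappa A (\bigcup_(X in K) X) = \bigcup_(X in K) kappa A X;
  tdf_finite_causes : forall X0 : set tx, finite_set X0 ->
      exists2 A0 : set actor, finite_set A0 & X0 `<=` kappa A0 set0;
  tdf_private_knowledge : forall A A', kappa A set0 `<=` kappa A' set0 -> A `<=` A';
  tdf_no_shared_secrets : forall A B X, kappa A X `&` kappa B X `<=` kappa (A `&` B) X
}.

Fixpoint all_in (X : set tx) (Y : seq tx) : Prop :=
  if Y is x :: Y' then X x /\ all_in X Y' else True.
Definition seq_over (X : set tx) : set (seq tx) := [set Y | all_in X Y].

(** Maximum of a set of integers (chosen classically; 0 if no maximum exists). *)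
Definition is_max (S : set int) (m : int) : Prop := S m /\ forall x, S x -> (x <= m)%R.
Definition maxZ (S : set int) : int := xget 0%R (is_max S).

Definition uG (wf : wallet -> nat) (C : contract) (kappa : set actor -> set tx -> set tx)
    (A : set actor) (s : bstate C) : int :=
  maxZ [set gain wf A s Y | Y in seq_over (kappa A set0)].

Definition xG (wf : wallet -> nat) (C : contract) (kappa : set actor -> set tx -> set tx)
    (A : set actor) (s : bstate C) (Y : seq tx) : int :=
  (gain wf A s Y - uG wf kappa A s)%R.

Definition MEV (wf : wallet -> nat) (C : contract) (kappa : set actor -> set tx -> set tx)
    (A : set actor) (s : bstate C) (P : set tx) : int :=
  maxZ [set xG wf kappa A s Y | Y in seq_over (kappa A P)].

End Model.

(* Main.v *)
Require Import Defs.
From mathcomp Require Import all_boot all_order all_algebra.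
From mathcomp Require Import boolp classical_sets functions cardinality fsbigop.
Local Open Scope classical_set_scope.

Lemma compact1 (actor : choiceType) (tx : Type) (kappa : set actor -> set tx -> set tx)
  (kt : tdf kappa) (A : set actor) (P : set tx) (x : tx) :
  kappa A P x -> exists2 R, finite_set R /\ R `<=` P & kappa A R x.
Proof.
move=> kPx; apply: contrapT => Hno.
pose M (Q : set tx) := Q `<=` P /\ forall G, finite_set G -> G `<=` P -> ~ kappa A (Q `|` G) x.
have M0 : M set0.
  split=> // G fG GP kG; apply: Hno; exists G => //; by rewrite set0U in kG.
have [Qm [[QmP MQm] Qmax]] : exists Qm, M Qm /\ forall B, Qm `<` B -> ~ M B.
  apply: Zorn_bigcup => F FM Ftot.
  have [[Q0 FQ0]|F0] := pselect (F !=set0); last first.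
    have -> : F = set0 by apply/seteqP; split=> // Q FQ; apply: F0; exists Q.
    by rewrite bigcup_set0.
  split.
    by move=> y [Q FQ Qy]; exact: (FM Q FQ).1.
  move=> G fG GP.
  pose K := [set Q `|` G | Q in F].
  have -> : (\bigcup_(X in F) X) `|` G = \bigcup_(X in K) X.
    apply/seteqP; split=> y.
      case=> [[Q FQ Qy]|Gy]; first by exists (Q `|` G); [exists Q|left].
      by exists (Q0 `|` G); [exists Q0|right].
    case=> _ [Q FQ <-] [Qy|Gy]; [left; exists Q|right] => //.
  rewrite (tdf_continuous kt); last first.
  - move=> _ _ [Q1 FQ1 <-] [Q2 FQ2 <-].
    by case: (Ftot Q1 Q2 FQ1 FQ2) => H; [left|right]; apply: setSU.
  - by exists (Q0 `|` G); exists Q0.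
  case=> _ [Q FQ <-]; exact: (FM Q FQ).2.
have [[y [Py nQy]]|] := pselect (exists y, P y /\ ~ Qm y).
  apply: (Qmax (Qm `|` [set y])).
    split; first exact: subsetUl.
    by move=> /(_ y (or_intror erefl)).
  split; first by move=> z [/QmP|->].
  move=> G fG GP; rewrite -setUA; apply: MQm.
    by rewrite finite_setU; split=> //; exact: finite_set1.
  by move=> z [->|/GP].
move=> Hall; apply: (MQm set0) => //.
rewrite setU0; apply: (tdf_monotone kt _ _ kPx) => // z Pz.
by apply: contrapT => nQz; apply: Hall; exists z.
Qed.

Lemma all_in_mono (tx : Type) (X X' : set tx) (Y : seq tx) :
  X `<=` X' -> all_in X Y -> all_in X' Y.
Proof. by move=> XX'; elim: Y => //= x Y IH [Xx HY]; split; [exact: XX'|exact: IH]. Qed.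

Lemma compact_seq (actor : choiceType) (tx : Type) (kappa : set actor -> set tx -> set tx)
  (kt : tdf kappa) (A : set actor) (P : set tx) (Y : seq tx) :
  all_in (kappa A P) Y -> exists2 R, finite_set R /\ R `<=` P & all_in (kappa A R) Y.
Proof.
elim: Y => [|x Y IH] /=; first by move=> _; exists set0 => //; split.
case=> /(@compact1 _ _ kappa kt) [R1 [fR1 R1P] kR1] /IH [R2 [fR2 R2P] kR2].
exists (R1 `|` R2).
  by rewrite finite_setU; split=> //; move=> z [/R1P|/R2P].
split.
  by apply: (tdf_monotone kt (@subset_refl _ A) _ kR1) => z ?; left.
by apply: all_in_mono kR2; apply: (tdf_monotone kt (@subset_refl _ A)) => z ?; right.
Qed.

Lemma maxZ_eq (S : set int) m : is_max S m -> maxZ S = m.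
Proof.
move=> Hm; apply: xget_unique => // y Hy.
by apply/Order.POrderTheory.le_anti; rewrite Hm.2 ?Hy.2 //; [exact: Hm.1|exact: Hy.1].
Qed.

Lemma maxZ_none (S : set int) : ~ (exists m, is_max S m) -> maxZ S = 0%R.
Proof. by move=> H; apply: xgetPN => m Hm; apply: H; exists m. Qed.

Arguments maxZ_eq {S m}.
Arguments maxZ_none {S}.

Lemma MEV0 (actor : choiceType) (tok tx : Type) (wf : wallet tok -> nat)
  (kappa : set actor -> set tx -> set tx) (C : contract actor tok tx)
  (A : set actor) (s : bstate C) : MEV wf kappa A s set0 = 0%R.
Proof.
rewrite /MEV /xG.
have [[c Hc]|Hn] := pselect (exists c, is_max [set gain wf A s Y | Y in seq_over (kappa A set0)] c).
  rewrite /uG (maxZ_eq Hc); apply: maxZ_eq; split.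
    by case: Hc => -[Y HY <-] _; exists Y => //; rewrite GRing.subrr.
  move=> _ [Y HY <-]; rewrite Num.Theory.subr_le0; apply: Hc.2; by exists Y.
rewrite /uG (maxZ_none Hn); apply: maxZ_none => -[m [[Y HY <-] Hm]].
apply: Hn; exists (gain wf A s Y); split; first by exists Y.
move=> _ [Z HZ <-]; have := Hm (gain wf A s Z - 0)%R.
rewrite !GRing.subr0; apply; exists Z => //; by rewrite GRing.subr0.
Qed.

Theorem mainTheorem14 (actor : countType) (tok tx : Type)
    (actor_inf : infinite_set [set: actor])
    (wf : wallet tok -> nat) (wf_add : wealth_fun wf)
    (kappa : set actor -> set tx -> set tx) (kappa_tdf : tdf kappa)
    (C : contract actor tok tx) (Cbounded : bounded wf C)
    (A : set actor) (P : set tx) (s : bstate C) (s_reach : reachable s) :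
  exists P0 : set tx, [/\ finite_set P0, P0 `<=` P &
    MEV wf kappa A s P0 = MEV wf kappa A s P].
Proof.
have [[m Hm]|Hn] := pselect (exists m, is_max [set xG wf kappa A s Y | Y in seq_over (kappa A P)] m); last first.
  exists set0; split=> //; rewrite MEV0 /MEV maxZ_none //.
have [[Y HY HYm] Hle] := Hm.
have [R [fR RP] kR] := @compact_seq _ _ kappa kappa_tdf _ _ _ HY.
exists R; split=> //; rewrite /MEV (maxZ_eq Hm); apply: maxZ_eq; split.
  by exists Y.
move=> _ [Z HZ <-]; apply: Hle; exists Z => //.
apply: all_in_mono HZ; exact: (tdf_monotone kappa_tdf (@subset_refl _ A) RP).
Qed.
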